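(* Let $n$ and $m$ be coprime positive integers. Then $c_{\mathrm{poly}}(nm)\geq c_{\mathrm{poly}}(n)\,c_{\mathrm{poly}}(m)$.
   Context: $S(\mathbb{Z}_n)$ is the set of bijections $\mathbb{Z}_n\to\mathbb{Z}_n$, and $S_{\mathrm{poly}}(\mathbb{Z}_n)$ is the set of $\pi\in S(\mathbb{Z}_n)$ for which there is a polynomial $f\in\mathbb{Z}_n[x]$ with $\pi(x)=f(x)$ for all $x\in\mathbb{Z}_n$. $\mathrm{cyc}(\pi)$ is the number of cycles (including fixed points) of $\pi$. Define $c_{\mathrm{poly}}(n)=\min_{\pi\in S_{\mathrm{poly}}(\mathbb{Z}_n)}\max_{k\in\mathbb{Z}_n}\mathrm{cyc}(x\mapsto\pi(x+k))$. *)

(* Defs.v *)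
From mathcomp Require Import all_boot all_fingroup.
From mathcomp Require Import boolp.
Set Implicit Arguments. Unset Strict Implicit. Unset Printing Implicit Defensive.

(* Z_n is modelled by 'I_n = {0,...,n-1}, with arithmetic taken mod n. *)

Lemma Zn_pos n (x : 'I_n) : 0 < n.
Proof. by apply: leq_ltn_trans (ltn_ord x). Qed.

Definition Zn_add n (k x : 'I_n) : 'I_n :=
  Ordinal (ltn_pmod (x + k) (Zn_pos x)).

Lemma Zn_add_inj n (k : 'I_n) : injective (Zn_add k).
Proof.
move=> x y /(congr1 val) /= /eqP; rewrite eqn_modDr => /eqP.
by rewrite !modn_small // => /val_inj.
Qed.

Definition shift_perm n (k : 'I_n) : {perm 'I_n} := perm (@Zn_add_inj n k).

(* A polynomial f = sum_i a_i x^i in Z_n[x], given by its coefficient list,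
   evaluated at x in Z_n (coefficients taken as natural representatives). *)
Definition poly_eval_mod (n : nat) (a : seq nat) (x : nat) : nat :=
  (\sum_(i < size a) nth 0 a i * x ^ i) %% n.

Definition is_poly_perm n (pi : {perm 'I_n}) : Prop :=
  exists a : seq nat, forall x : 'I_n, val (pi x) = poly_eval_mod n a x.

(* cyc(pi): number of cycles (fixed points included) *)
Definition cyc n (pi : {perm 'I_n}) : nat := #|porbits pi|.

(* max_k cyc(x |-> pi(x + k)); note (s * t) x = t (s x) for perms. *)
Definition max_shift_cyc n (pi : {perm 'I_n}) : nat :=
  \max_(k : 'I_n) cyc (shift_perm k * pi).

(* The neutral
   element n.+1 exceeds every value (max_shift_cyc <= n) and the identity is
   always a polynomial permutation, so this is the true minimum. *)
Definition c_poly (n : nat) : nat :=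
  \big[minn/n.+1]_(pi : {perm 'I_n} | `[< is_poly_perm pi >]) max_shift_cyc pi.

(* Main.v *)
Require Import Defs.
From mathcomp Require Import all_boot all_fingroup.
From mathcomp Require Import boolp.
Set Implicit Arguments. Unset Strict Implicit. Unset Printing Implicit Defensive.

Lemma iter_comm (T T1 : finType) (s : {perm T}) (s1 : {perm T1}) (f1 : T -> T1)
  (h : forall x, f1 (s x) = s1 (f1 x)) i x :
  f1 ((s ^+ i)%g x) = (s1 ^+ i)%g (f1 x).
Proof.
elim: i x => [|i IH] x; first by rewrite !expg0 !perm1.
by rewrite !expgSr !permM h IH.
Qed.

Lemma porbit_comm (T T1 : finType) (s : {perm T}) (s1 : {perm T1}) (f1 : T -> T1)
  (h : forall x, f1 (s x) = s1 (f1 x)) x y :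
  y \in porbit s x -> porbit s1 (f1 y) = porbit s1 (f1 x).
Proof.
by case/porbitP => i ->; rewrite (iter_comm h) porbit_perm.
Qed.

Lemma cyc_prod (T T1 T2 : finType) (x0 : T) (s : {perm T}) (s1 : {perm T1})
  (s2 : {perm T2}) (f1 : T -> T1) (f2 : T -> T2)
  (h1 : forall x, f1 (s x) = s1 (f1 x)) (h2 : forall x, f2 (s x) = s2 (f2 x))
  (hs : forall a b, exists x, f1 x = a /\ f2 x = b) :
  #|porbits s1| * #|porbits s2| <= #|porbits s|.
Proof.
pose g x := (porbit s1 (f1 x), porbit s2 (f2 x)).
pose k (O : {set T}) := g (odflt x0 [pick x in O]).
rewrite -cardsX; apply: leq_trans (leq_imset_card k _).
apply: subset_leq_card; apply/subsetP => -[A B] /setXP [] /imsetP [a _ ->] /imsetP [b _ ->].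
have [x [ha hb]] := hs a b.
apply/imsetP; exists (porbit s x); first by apply/imsetP; exists x.
rewrite /k; case: pickP => [y hy|/(_ x)]; last by rewrite porbit_id.
by rewrite /g (porbit_comm h1 hy) (porbit_comm h2 hy) ha hb.
Qed.

Lemma poly_mod d a x : poly_eval_mod d a (x %% d) = poly_eval_mod d a x.
Proof.
rewrite /poly_eval_mod -[LHS]modn_summ -[RHS]modn_summ; congr (_ %% _).
by apply: eq_bigr => i _; rewrite -modnMmr modnXm modnMmr.
Qed.

Section Proj.
Variables (N d : nat) (Npos : 0 < N) (hd : d %| N) (dpos : 0 < d).
Variables (pi : {perm 'I_N}) (a : seq nat).
Hypothesis ha : forall x : 'I_N, val (pi x) = poly_eval_mod N a x.

Definition proj (x : 'I_N) : 'I_d := Ordinal (ltn_pmod x dpos).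
Definition Fd (x : 'I_d) : 'I_d := Ordinal (ltn_pmod (\sum_(i < size a) nth 0 a i * x ^ i) dpos).

Lemma proj_pi x : proj (pi x) = Fd (proj x).
Proof.
apply: val_inj => /=; rewrite ha /poly_eval_mod modn_dvdm //.
by have := poly_mod d a x; rewrite /poly_eval_mod.
Qed.

Lemma Fd_inj : injective Fd.
Proof.
have dleN : d <= N by apply: dvdn_leq.
pose r (y : 'I_d) := proj (pi^-1 (Ordinal (leq_trans (ltn_ord y) dleN)))%g.
have rK : cancel r Fd.
  move=> y; rewrite /r -proj_pi permKV; apply: val_inj => /=.
  by rewrite modn_small.
have [r' rr' r'r] := inj_card_bij (can_inj rK) (leqnn _).
apply: (can_inj (g := r)) => y.
by rewrite -{1}[y]r'r rK r'r.
Qed.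

Definition pd : {perm 'I_d} := perm Fd_inj.

Lemma pd_poly : is_poly_perm pd.
Proof. by exists a => x; rewrite permE. Qed.

Lemma proj_shift (k : 'I_N) (kd : 'I_d) (hk : val kd = k %% d) x :
  proj ((shift_perm k * pi)%g x) = (shift_perm kd * pd)%g (proj x).
Proof.
rewrite !permM proj_pi !permE; congr Fd; apply: val_inj => /=.
by rewrite hk modn_dvdm // modnDm.
Qed.
End Proj.

Lemma cyc_le n (s : {perm 'I_n}) : cyc s <= n.
Proof. by rewrite /cyc /porbits; apply: leq_trans (leq_imset_card _ _) _; rewrite card_ord. Qed.

Lemma bigmin_le (I : finType) (P : pred I) (F : I -> nat) idx i :
  P i -> \big[minn/idx]_(j | P j) F j <= F i.
Proof.
move=> Pi; move: (mem_index_enum i); elim: (index_enum I) => [|j r IH] //.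
rewrite inE big_cons => /orP[/eqP <-|/IH h]; first by rewrite Pi geq_minl.
by case: (P j) => //; apply: leq_trans (geq_minr _ _) h.
Qed.

Lemma c_poly_le n (pi : {perm 'I_n}) : is_poly_perm pi -> c_poly n <= max_shift_cyc pi.
Proof.
by move=> hp; apply: bigmin_le; apply/asboolP.
Qed.

Lemma c_poly_len n : c_poly n <= n.
Proof.
apply: leq_trans (c_poly_le (pi := 1%g) _) _.
  exists [:: 0; 1] => x; rewrite perm1 /poly_eval_mod big_ord_recr big_ord1 /=.
  by rewrite mul0n add0n mul1n expn1 modn_small.
by apply/bigmax_leqP => i _; apply: cyc_le.
Qed.

Lemma key n m (hn : 0 < n) (hm : 0 < m) (hnm : coprime n m)
  (pi : {perm 'I_(n * m)}) : is_poly_perm pi ->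
  c_poly n * c_poly m <= max_shift_cyc pi.
Proof.
case=> a ha.
have Npos : 0 < n * m by rewrite muln_gt0 hn hm.
have dn : n %| n * m by apply: dvdn_mulr.
have dm : m %| n * m by apply: dvdn_mull.
set p1 := pd Npos dn hn ha; set p2 := pd Npos dm hm ha.
have [k1 e1] := eq_bigmax (fun k => cyc (shift_perm k * p1)) (ltac:(by rewrite card_ord)).
have [k2 e2] := eq_bigmax (fun k => cyc (shift_perm k * p2)) (ltac:(by rewrite card_ord)).
have crt : forall (a1 : 'I_n) (a2 : 'I_m), exists x : 'I_(n * m),
    val a1 = x %% n /\ val a2 = x %% m.
  move=> a1 a2; exists (Ordinal (ltn_pmod (chinese n m a1 a2) Npos)) => /=.
  rewrite !modn_dvdm // chinese_modl // chinese_modr //.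
  by rewrite !modn_small.
have [k [hk1 hk2]] := crt k1 k2.
apply: leq_trans (leq_bigmax k).
apply: leq_trans (cyc_prod (Ordinal Npos) (proj_shift Npos dn hn ha hk1)
   (proj_shift Npos dm hm ha hk2) _).
  apply: leq_mul.
    by apply: leq_trans (c_poly_le (pd_poly Npos dn hn ha)) _; rewrite /max_shift_cyc e1.
  by apply: leq_trans (c_poly_le (pd_poly Npos dm hm ha)) _; rewrite /max_shift_cyc e2.
move=> b1 b2; have [x [h1 h2]] := crt b1 b2.
by exists x; split; apply: val_inj.
Qed.

Theorem lemma5p1 (n m : nat) (hn : 0 < n) (hm : 0 < m) (hnm : coprime n m) :
  c_poly n * c_poly m <= c_poly (n * m).
Proof.
rewrite {3}/c_poly; apply: (big_ind (fun v => c_poly n * c_poly m <= v)).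
- apply: leq_trans (leqnSn _); exact: leq_mul (c_poly_len n) (c_poly_len m).
- by move=> x y hx hy; rewrite leq_min hx hy.
- by move=> pi /asboolP; apply: key.
Qed.
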